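(* Suppose Assumptions RA and MON hold and $\mathbb E[D\mid Z=1]-\mathbb E[D\mid Z=0]>0$. Then $p_c=\mathbb E[D\mid Z=1]-\mathbb E[D\mid Z=0]$, $p_a=\mathbb E[D\mid Z=0]$, $p_n=\mathbb E[1-D\mid Z=1]$, $p_{df}=0$; for all $y$, $$F_{11a}^{LB}(y)\equiv\max\Big\{\tfrac{\mathbb P(Y\le y,D=1\mid Z=1)-p_c}{p_a},0\Big\}\le F_{11a}(y)\le\min\Big\{\tfrac{\mathbb P(Y\le y,D=1\mid Z=1)}{p_a},1\Big\}\equiv F_{11a}^{UB}(y),$$ $$F_{00n}^{LB}(y)\equiv\max\Big\{\tfrac{\mathbb P(Y\le y,D=0\mid Z=0)-p_c}{p_n},0\Big\}\le F_{00n}(y)\le\min\Big\{\tfrac{\mathbb P(Y\le y,D=0\mid Z=0)}{p_n},1\Big\}\equiv F_{00n}^{UB}(y),$$ $F_{11c}(y)=\frac{\mathbb P(Y\le y,D=1\mid Z=1)-p_aF_{11a}(y)}{p_c}$, $F_{00c}(y)=\frac{\mathbb P(Y\le y,D=0\mid Z=0)-p_nF_{00n}(y)}{p_c}$, $F_{10a}(y)=\mathbb P(Y\le y\mid D=1,Z=0)$, $F_{01n}(y)=\mathbb P(Y\le y\mid D=0,Z=1)$. These bounds are pointwise sharp.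
   Context: Setup: binary instrument $Z$ ($0<\mathbb P(Z=1)<1$), binary treatment $D$, real outcome $Y$; potential treatments $D_0,D_1$ and potential outcomes $Y_{dz}$ ($d,z\in\{0,1\}$), with $D=D_1Z+D_0(1-Z)$, $Y=(Y_{11}Z+Y_{10}(1-Z))D+(Y_{01}Z+Y_{00}(1-Z))(1-D)$. Types $T=(D_0,D_1)$: $a=(1,1)$, $n=(0,0)$, $c=(0,1)$, $df=(1,0)$, $p_t=\mathbb P(T=t)$. RA: $Z$ independent of $(Y_{11},Y_{10},Y_{01},Y_{00},D_1,D_0)$. MON: either $D_1\ge D_0$ a.s. or $D_0\ge D_1$ a.s. (The exclusion restriction is not assumed.) $F_{dzt}(y)\equiv\mathbb P(Y_{dz}\le y\mid T=t)$. Pointwise sharp: for each $y$, every value in the stated interval is attained for some latent distribution satisfying RA and MON and consistent with the observed distribution of $(Y,D,Z)$. *)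

(* Defs.v *)
From HB Require Import structures.
From mathcomp Require Import all_boot all_order all_algebra.
From mathcomp Require Import all_classical all_reals all_analysis.
Set Implicit Arguments. Unset Strict Implicit. Unset Printing Implicit Defensive.
Import Order.TTheory GRing.Theory Num.Theory.
Local Open Scope classical_set_scope.
Local Open Scope ring_scope.

(* The latent variables other than Z:  (D0, D1, Y11, Y10, Y01, Y00). *)
Definition Rest (R : realType) : Type := (bool * bool * R * R * R * R)%type.
(* A latent outcome: (Z, (D0, D1, Y11, Y10, Y01, Y00)).  A "latent
   distribution" is a probability measure on this (product-measurable) space. *)
Definition Lat (R : realType) : Type := (bool * Rest R)%type.

Section Latent.
Variable R : realType.
Implicit Types w : Lat R.

Definition Zv w : bool := w.1.
Definition D0v w : bool := w.2.1.1.1.1.1.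
Definition D1v w : bool := w.2.1.1.1.1.2.
Definition Y11v w : R := w.2.1.1.1.2.
Definition Y10v w : R := w.2.1.1.2.
Definition Y01v w : R := w.2.1.2.
Definition Y00v w : R := w.2.2.

Definition Ypot (d z : bool) w : R :=
  match d, z with
  | true, true => Y11v w | true, false => Y10v w
  | false, true => Y01v w | false, false => Y00v w end.

Definition Dv w : bool := if Zv w then D1v w else D0v w.
Definition Yv w : R := Ypot (Dv w) (Zv w) w.

Definition Tv w : bool * bool := (D0v w, D1v w).
Definition ta : bool * bool := (true, true).
Definition tn : bool * bool := (false, false).
Definition tc : bool * bool := (false, true).
Definition tdf : bool * bool := (true, false).

Definition obs w : (R * bool * bool)%type := (Yv w, Dv w, Zv w).
End Latent.

Section Prob.
Variable R : realType.
Let L := Lat R.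
Variable P : probability L R.

Definition Pr (A : set L) : R := fine (P A).
Definition Prc (A B : set L) : R := Pr (A `&` B) / Pr B.
Definition EcondZ (f : L -> R) (z : bool) : R :=
  fine (\int[P]_(w in [set w | Zv w = z]) (f w)%:E) / Pr [set w | Zv w = z].

Definition ptype (t : bool * bool) : R := Pr [set w | Tv w = t].

Definition Fpot (d z : bool) (t : bool * bool) (y : R) : R :=
  Prc [set w | Ypot d z w <= y] [set w | Tv w = t].

Definition RA : Prop :=
  forall (A : set bool) (B : set (Rest R)), measurable B ->
    P (A `*` B) = (P (fst @^-1` A) * P (snd @^-1` B))%E.

Definition MON : Prop :=
  {ae P, forall w, (D0v w <= D1v w)%N} \/ {ae P, forall w, (D1v w <= D0v w)%N}.
End Prob.

Definition same_obs (R : realType) (P Q : probability (Lat R) R) : Prop :=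
  forall B : set (R * bool * bool)%type, measurable B ->
    P (@obs R @^-1` B) = Q (@obs R @^-1` B).

(* Main.v *)
Require Import Defs.
From HB Require Import structures.
From mathcomp Require Import all_boot all_order all_algebra.
From mathcomp Require Import all_classical all_reals all_analysis.
From mathcomp Require Import ring lra.
Set Implicit Arguments. Unset Strict Implicit. Unset Printing Implicit Defensive.
Import Order.TTheory GRing.Theory Num.Theory.
Local Open Scope classical_set_scope.
Local Open Scope ring_scope.


Section WPush.
Local Open Scope ereal_scope.
Context d d' (T1 : measurableType d) (T2 : measurableType d') (R : realType).
Variables (m : {measure set T1 -> \bar R}) (f : T1 -> T2) (D : set T1) (k : R).
Definition wpush (mf : measurable_fun setT f) (mD : measurable D) (k0 : (0 <= k)%R)
  (A : set T2) : \bar R := k%:E * m (f @^-1` A `&` D).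
Variables (mf : measurable_fun setT f) (mD : measurable D) (k0 : (0 <= k)%R).
Let mpre A : measurable A -> measurable (f @^-1` A `&` D).
Proof. by move=> mA; apply: measurableI => //; rewrite -[X in measurable X]setTI; exact: mf. Qed.
Let wpush0 : wpush mf mD k0 set0 = 0.
Proof. by rewrite /wpush preimage_set0 set0I measure0 mule0. Qed.
Let wpush_ge0 A : 0 <= wpush mf mD k0 A.
Proof. by rewrite /wpush mule_ge0. Qed.
Let wpush_sigma_additive : semi_sigma_additive (wpush mf mD k0).
Proof.
move=> F mF tF mUF; rewrite /wpush.
rewrite [X in X @ \oo --> _](_ : _ =
    (fun n => k%:E * \sum_(0 <= i < n) m (f @^-1` F i `&` D))); last first.
  by apply/funext => n; rewrite ge0_sume_distrr.
have [->|kn0] := eqVneq k 0%R.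
  rewrite mul0e [X in X @ \oo --> _](_ : _ = cst 0); first exact: cvg_cst.
  by under eq_fun do rewrite mul0e.
apply: cvgeZl => //; rewrite preimage_bigcup setI_bigcupl.
apply: measure_semi_sigma_additive.
- by move=> n; exact: mpre.
- apply/trivIsetP => /= i j _ _ ij; rewrite setIACA -preimage_setI.
  by move/trivIsetP : tF => /(_ _ _ _ _ ij) ->//; rewrite preimage_set0 set0I.
- by rewrite -setI_bigcupl -preimage_bigcup; exact: mpre.
Qed.
HB.instance Definition _ := isMeasure.Build _ _ _ (wpush mf mD k0)
  wpush0 wpush_ge0 wpush_sigma_additive.
End WPush.

Section MkProb.
Context d (T : measurableType d) (R : realType).
Variables (m : {measure set T -> \bar R}).
Definition mkprob (H : m setT = 1%E) : set T -> \bar R := m.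
Variable (H : m setT = 1%E).
Let mk0 : mkprob H set0 = 0%E. Proof. exact: measure0. Qed.
Let mk_ge0 A : (0 <= mkprob H A)%E. Proof. exact: measure_ge0. Qed.
Let mk_sa : semi_sigma_additive (mkprob H). Proof. exact: measure_semi_sigma_additive. Qed.
HB.instance Definition _ := isMeasure.Build _ _ _ (mkprob H) mk0 mk_ge0 mk_sa.
HB.instance Definition _ := Measure_isProbability.Build _ _ _ (mkprob H) H.
End MkProb.

Section Test. Variable R : realType. Variable P : probability (Lat R) R.
Check (P \x P : probability _ R)%E.
Check (P : {sigma_finite_measure set _ -> \bar R}).
Variable Q : {measure set (Lat R) -> \bar R}. Hypothesis HQ : Q setT = 1%E.
Check (mkprob HQ : probability _ R).
Check ((P \x (mkprob HQ)) : probability _ R)%E.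
Check (fun f mf mD k0 => (@wpush _ _ _ _ R P f setT 1 mf mD k0 : {measure set (Lat R) -> \bar R})).
End Test.


Section PrLemmas.
Context (R : realType) (P : probability (Lat R) R).
Local Notation T := (Lat R).
Implicit Types A B : set T.

Lemma PrE A : measurable A -> P A = (Pr P A)%:E.
Proof.
move=> mA; rewrite /Pr fineK// ge0_fin_numE// (le_lt_trans (probability_le1 P mA))//.
exact: ltey.
Qed.
Lemma Pr_ge0 A : 0 <= Pr P A.
Proof. by rewrite /Pr fine_ge0. Qed.
Lemma Pr_le1 A : measurable A -> Pr P A <= 1.
Proof. by move=> mA; rewrite -lee_fin -PrE// probability_le1. Qed.
Lemma PrT : Pr P setT = 1.
Proof. by rewrite /Pr probability_setT. Qed.
Lemma Pr0 : Pr P set0 = 0.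
Proof. by rewrite /Pr measure0. Qed.
Lemma PrU A B : measurable A -> measurable B -> A `&` B = set0 ->
  Pr P (A `|` B) = Pr P A + Pr P B.
Proof.
move=> mA mB AB; apply: EFin_inj; rewrite EFinD -!PrE//; last exact: measurableU.
by rewrite measureU.
Qed.
Lemma Pr_le A B : measurable A -> measurable B -> A `<=` B -> Pr P A <= Pr P B.
Proof. by move=> mA mB AB; rewrite -lee_fin -!PrE// le_measure// inE. Qed.
Lemma Pr_split A B : measurable A -> measurable B ->
  Pr P A = Pr P (A `&` B) + Pr P (A `&` ~` B).
Proof.
move=> mA mB; rewrite -PrU; first by rewrite -setIUr setUv setIT.
- exact: measurableI.
- by apply: measurableI => //; exact: measurableC.
- by rewrite setIACA setICr setI0.
Qed.
Lemma PrC A : measurable A -> Pr P (~` A) = 1 - Pr P A.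
Proof. by move=> mA; have := Pr_split measurableT mA; rewrite PrT !setTI => ->; ring. Qed.
Lemma Pr_null A B : measurable A -> measurable B -> A `<=` B -> Pr P B = 0 -> Pr P A = 0.
Proof. by move=> mA mB AB B0; apply/eqP; rewrite eq_le Pr_ge0 -B0 Pr_le. Qed.
Lemma Pr_eqset A B : A = B -> Pr P A = Pr P B.
Proof. by move=> ->. Qed.
End PrLemmas.


Section MeasBasics.
Context d1 d2 d3 (T1 : measurableType d1) (T2 : measurableType d2) (T3 : measurableType d3).
Lemma mfst_comp (g : T1 -> T2 * T3) : measurable_fun setT g ->
  measurable_fun setT (fun x => (g x).1).
Proof. by move=> mg; exact: (measurableT_comp measurable_fst mg). Qed.
Lemma msnd_comp (g : T1 -> T2 * T3) : measurable_fun setT g ->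
  measurable_fun setT (fun x => (g x).2).
Proof. by move=> mg; exact: (measurableT_comp measurable_snd mg). Qed.
Lemma mpair (f : T1 -> T2) (g : T1 -> T3) : measurable_fun setT f -> measurable_fun setT g ->
  measurable_fun setT (fun x => (f x, g x)).
Proof. exact: measurable_fun_pair. Qed.
Lemma mpreT (f : T1 -> T2) (A : set T2) : measurable_fun setT f -> measurable A ->
  measurable (f @^-1` A).
Proof. by move=> mf mA; rewrite -[X in measurable X]setTI; exact: mf. Qed.
End MeasBasics.

Lemma mbool d (T : measurableType d) (g : bool -> T) : measurable_fun setT g.
Proof. by move=> _ A _. Qed.

Lemma mboolcomp d d' (T : measurableType d) (T' : measurableType d') (f : T -> bool) (g : bool -> T') :
  measurable_fun setT f -> measurable_fun setT (fun x => g (f x)).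
Proof. by move=> mf; exact: (measurableT_comp (mbool g) mf). Qed.

Ltac mproj := repeat first
  [ exact: measurable_id | exact: measurable_cst
  | apply: mfst_comp | apply: msnd_comp | apply: mpair ].

Section Sets.
Variable R : realType.
Notation L := (Lat R).
Notation Rs := (Rest R).
Definition rD0 (r : Rs) : bool := r.1.1.1.1.1.
Definition rD1 (r : Rs) : bool := r.1.1.1.1.2.
Definition rY11 (r : Rs) : R := r.1.1.1.2.
Definition rY10 (r : Rs) : R := r.1.1.2.
Definition rY01 (r : Rs) : R := r.1.2.
Definition rY00 (r : Rs) : R := r.2.
Definition rT (t : bool * bool) : set Rs := [set r | (rD0 r, rD1 r) = t].
Definition Zs (b : bool) : set L := [set w | w.1 = b].
Definition Lft (B : set Rs) : set L := snd @^-1` B.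

Lemma mrD0 : measurable_fun setT rD0. Proof. rewrite /rD0; mproj. Qed.
Lemma mrD1 : measurable_fun setT rD1. Proof. rewrite /rD1; mproj. Qed.
Lemma mrY11 : measurable_fun setT rY11. Proof. rewrite /rY11; mproj. Qed.
Lemma mrY10 : measurable_fun setT rY10. Proof. rewrite /rY10; mproj. Qed.
Lemma mrY01 : measurable_fun setT rY01. Proof. rewrite /rY01; mproj. Qed.
Lemma mrY00 : measurable_fun setT rY00. Proof. rewrite /rY00; mproj. Qed.

Lemma mrT t : measurable (rT t).
Proof.
have -> : rT t = rD0 @^-1` [set t.1] `&` rD1 @^-1` [set t.2].
  by apply/seteqP; split => r /=; rewrite /rT /=; case: t => a b /=; [case => -> ->|case => -> ->].
by apply: measurableI; apply: mpreT => //; [exact: mrD0|exact: mrD1].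
Qed.
Lemma mZs b : measurable (Zs b).
Proof. by apply: (@mpreT _ _ _ _ fst [set b]) => //; exact: measurable_fst. Qed.
Lemma mLft B : measurable B -> measurable (Lft B).
Proof. by move=> mB; apply: mpreT => //; exact: measurable_snd. Qed.
Lemma mle d (T : measurableType d) (f : T -> R) y : measurable_fun setT f ->
  measurable [set x | f x <= y].
Proof.
move=> mf; have -> : [set x | f x <= y] = f @^-1` [set` `]-oo, y]].
  by apply/seteqP; split=> x /=; rewrite in_itv /=.
by apply: mpreT mf _; exact: measurable_itv.
Qed.
End Sets.


Ltac setsolve := apply/seteqP; split => -[[] [[[[[[] []] a] b] c] e]];
  cbv beta iota delta [Lft Zs rT rD0 rD1 rY11 rY10 rY01 rY00 Yv Dv Zv Tv D0v D1v Ypot Y11v Y10v Y01v Y00v setI preimage setU setC set1 setT set0 mkset fst snd] ;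
  intuition (try discriminate).
Ltac setsolveR := apply/seteqP; split => -[[[[[[] []] a] b] c] e];
  cbv beta iota delta [Lft Zs rT rD0 rD1 rY11 rY10 rY01 rY00 Yv Dv Zv Tv D0v D1v Ypot Y11v Y10v Y01v Y00v setI preimage setU setC set1 setT set0 mkset fst snd ta tn tc tdf] ;
  intuition (try discriminate).

Section PartA.
Variable R : realType.
Variable P : probability (Lat R) R.
Hypothesis hRA : RA P.
Hypothesis hZ : 0 < Pr P (Zs true) < 1.
Local Notation Rs := (Rest R).

Lemma RAPr b (B : set Rs) : measurable B ->
  Pr P (Zs b `&` Lft B) = Pr P (Zs b) * Pr P (Lft B).
Proof.
move=> mB; have -> : Zs b `&` Lft B = [set b] `*` B.
  by apply/seteqP; split => -[z r] /=; rewrite /Zs /Lft /=; case.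
apply: EFin_inj; rewrite EFinM -!PrE//.
- exact: hRA.
all: try exact: mZs; try exact: (mLft mB); exact: measurableX.
Qed.

Lemma PrZ0 : Pr P (Zs false) = 1 - Pr P (Zs true).
Proof.
rewrite -PrC; last exact: mZs.
by congr Pr; apply/seteqP; split => -[[] r] /=; rewrite /Zs /=.
Qed.

Lemma PrZ_neq0 b : Pr P (Zs b) != 0.
Proof.
case/andP: hZ => h1 h2; case: b; first by rewrite gt_eqF.
by rewrite PrZ0 subr_eq0 eq_sym lt_eqF.
Qed.

Lemma PrcZ b (A : set (Lat R)) (B : set Rs) : measurable B ->
  A `&` Zs b = Zs b `&` Lft B -> Prc P A (Zs b) = Pr P (Lft B).
Proof.
move=> mB AB; rewrite /Prc AB RAPr// mulrAC divff ?mul1r//; exact: PrZ_neq0.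
Qed.

Lemma PrcZ2 b (A C : set (Lat R)) (B1 B2 : set Rs) : measurable B1 -> measurable B2 ->
  A `&` C = Zs b `&` Lft B1 -> C = Zs b `&` Lft B2 ->
  Prc P A C = Pr P (Lft B1) / Pr P (Lft B2).
Proof.
move=> mB1 mB2 AC1 C2; rewrite /Prc AC1 C2 !RAPr//.
by rewrite -mulf_div divff ?mul1r//; exact: PrZ_neq0.
Qed.

Lemma PrLftU (B1 B2 : set Rs) : measurable B1 -> measurable B2 -> B1 `&` B2 = set0 ->
  Pr P (Lft (B1 `|` B2)) = Pr P (Lft B1) + Pr P (Lft B2).
Proof.
move=> mB1 mB2 B12; rewrite -PrU; try exact: mLft.
- by [].
- have -> : Lft B1 `&` Lft B2 = Lft (B1 `&` B2) by [].
  by rewrite B12 /Lft preimage_set0.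
Qed.

Definition rL11 (y : R) : set Rs := [set r | rY11 r <= y].
Definition rL10 (y : R) : set Rs := [set r | rY10 r <= y].
Lemma mrL11 y : measurable (rL11 y). Proof. by rewrite /rL11; apply: mle; exact: mrY11. Qed.
Lemma mrL10 y : measurable (rL10 y). Proof. by rewrite /rL10; apply: mle; exact: mrY10. Qed.
Lemma mrD0b b : measurable [set r : Rs | rD0 r = b].
Proof. have -> : [set r : Rs | rD0 r = b] = (@rD0 R) @^-1` [set b] by [].
by apply: mpreT => //; exact: mrD0. Qed.
Lemma mrD1b b : measurable [set r : Rs | rD1 r = b].
Proof. have -> : [set r : Rs | rD1 r = b] = (@rD1 R) @^-1` [set b] by [].
by apply: mpreT => //; exact: mrD1. Qed.

Hypothesis hdf : Pr P (Lft (rT tdf)) = 0.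

Lemma G1E y : Prc P [set w | Yv w <= y /\ Dv w = true] [set w | Zv w = true] =
  Pr P (Lft (rL11 y `&` rT ta)) + Pr P (Lft (rL11 y `&` rT tc)).
Proof.
rewrite (@PrcZ true _ [set r | rY11 r <= y /\ rD1 r = true]); last first.
- setsolve.
- change (measurable (rL11 y `&` [set r : Rs | rD1 r = true])).
  exact: measurableI (mrL11 y) (mrD1b true).
rewrite -PrLftU.
- by congr Pr; congr Lft; setsolveR.
- exact: measurableI (mrL11 y) (mrT _).
- exact: measurableI (mrL11 y) (mrT _).
- setsolveR.
Qed.

Lemma F10aE y : Fpot P true false ta y =
  Prc P [set w | Yv w <= y] [set w | Dv w = true /\ Zv w = false].
Proof.
have -> : Fpot P true false ta y = Pr P (Lft (rL10 y `&` rT ta)) / Pr P (Lft (rT ta)) by [].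
rewrite (@PrcZ2 false _ _ [set r | rY10 r <= y /\ rD0 r = true] [set r | rD0 r = true]); last first.
- setsolve.
- setsolve.
- exact: mrD0b.
- change (measurable (rL10 y `&` [set r : Rs | rD0 r = true])).
  exact: measurableI (mrL10 y) (mrD0b true).
have -> : [set r : Rs | rY10 r <= y /\ rD0 r = true] = (rL10 y `&` rT ta) `|` (rL10 y `&` rT tdf).
  setsolveR.
have -> : [set r : Rs | rD0 r = true] = rT ta `|` rT tdf by setsolveR.
rewrite !PrLftU; try exact: mrT; try (exact: measurableI (mrL10 y) (mrT _)); try setsolveR.
rewrite hdf (@Pr_null R P (Lft (rL10 y `&` rT tdf)) (Lft (rT tdf))) ?addr0//; try (apply: mLft; exact: mrT).
- apply: mLft; exact: measurableI (mrL10 y) (mrT _).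
- by move=> w [].
Qed.

Lemma boundsR (A C pa pc : R) : 0 <= A <= pa -> 0 <= C <= pc ->
  Num.max ((A + C - pc) / pa) 0 <= A / pa <= Num.min ((A + C) / pa) 1.
Proof.
move=> /andP[A0 Apa] /andP[C0 Cpc].
have [pa0|pa0] := eqVneq pa 0.
  by rewrite pa0 !invr0 !mulr0 ge_max le_min lexx ler01.
have pap : 0 < pa by rewrite lt_neqAle eq_sym pa0 (le_trans A0 Apa).
rewrite ge_max le_min !ler_pM2r ?invr_gt0// ?divr_ge0// ?(ltW pap)//.
rewrite ler_pdivrMr// mul1r Apa andbT.
apply/andP; split; first lra.
lra.
Qed.

Lemma F11cR (A C pa pc : R) : 0 <= A <= pa -> pc != 0 ->
  C / pc = ((A + C) - pa * (A / pa)) / pc.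
Proof.
move=> /andP[A0 Apa] pc0; have [pa0|pa0] := eqVneq pa 0.
  have -> : A = 0 by apply/eqP; rewrite eq_le A0 -pa0 Apa.
  by rewrite pa0 !mul0r add0r subr0.
have -> : pa * (A / pa) = A by rewrite mulrCA divff// mulr1.
by rewrite addrAC subrr add0r.
Qed.
End PartA.



Section Mix.
Variable R : realType.
Local Notation L := (Lat R).
Definition hmix (p : L * L) : L :=
  (p.2.1, ((((p.2.2.1.1.1.1, p.1.2.1.1.1.2), p.2.2.1.1.2), p.2.2.1.2), p.2.2.2)).
Definition Hcomb (p : L * L) : L := (p.1.1, p.2.2).
Lemma mhmix : measurable_fun setT hmix. Proof. rewrite /hmix; mproj. Qed.
Lemma mHcomb : measurable_fun setT Hcomb. Proof. rewrite /Hcomb; mproj. Qed.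
Lemma msnd2 : measurable_fun setT (@snd L L). Proof. exact: measurable_snd. Qed.

Lemma rect_pre (f : L * L -> L) (X Y S S1 S2 : set L) :
  (forall w w', X w -> Y w' -> (S (f (w, w')) <-> S1 w /\ S2 w')) ->
  f @^-1` S `&` (X `*` Y) = (X `&` S1) `*` (Y `&` S2).
Proof.
move=> H; apply/seteqP; split => -[w w'] /=.
  by move=> [Sf [Xw Yw']]; have [] := (H w w' Xw Yw').1 Sf.
by move=> [[Xw S1w] [Yw' S2w']]; split => //; exact/(H w w' Xw Yw').2.
Qed.
End Mix.

Section PieceE.
Variable R : realType.
Variable P : probability (Lat R) R.
Local Notation L := (Lat R).
Lemma pieceE (f : L * L -> L) (mf : measurable_fun setT f) (X Y : set L)
   (mXY : measurable (X `*` Y)) (k : R) (k0 : 0 <= k) (S S1 S2 : set L) :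
  measurable X -> measurable Y -> measurable S1 -> measurable S2 ->
  (forall w w', X w -> Y w' -> (S (f (w, w')) <-> S1 w /\ S2 w')) ->
  wpush (P \x P)%E mf mXY k0 S = (k * (Pr P (X `&` S1) * Pr P (Y `&` S2)))%:E.
Proof.
move=> mX mY mS1 mS2 H; rewrite /wpush (rect_pre H).
have mA : measurable (X `&` S1) by exact: measurableI.
have mB : measurable (Y `&` S2) by exact: measurableI.
have E : ((P \x P) ((X `&` S1) `*` (Y `&` S2)) = P (X `&` S1) * P (Y `&` S2))%E.
  exact: (product_measure1E P P mA mB).
transitivity (k%:E * (P (X `&` S1) * P (Y `&` S2)))%E; first by congr (_ * _)%E; exact: E.
by rewrite !PrE// -!EFinM.
Qed.
End PieceE.

Section Construct.
Variable R : realType.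
Variable P : probability (Lat R) R.
Local Notation L := (Lat R).
Local Notation Rs := (Rest R).
Variables (y v : R).

Definition rAC : set Rs := rT ta `|` rT tc.
Lemma mrAC : measurable rAC. Proof. exact: measurableU (mrT _) (mrT _). Qed.
Definition X1 : set L := Lft (rAC `&` rL11 y).
Definition X2 : set L := Lft (rAC `&` ~` rL11 y).
Definition Nn : set L := Lft (~` rAC).
Lemma mX1 : measurable X1. Proof. apply: mLft; exact: measurableI mrAC (mrL11 y). Qed.
Lemma mX2 : measurable X2.
Proof. apply: mLft; exact: measurableI mrAC (measurableC (mrL11 y)). Qed.
Lemma mNn : measurable Nn. Proof. apply: mLft; exact: measurableC mrAC. Qed.
Lemma mTt t : measurable (Lft (rT t) : set L). Proof. apply: mLft; exact: mrT t. Qed.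

Definition pa := Pr P (Lft (rT ta)).
Definition pc := Pr P (Lft (rT tc)).
Definition G := Pr P X1.
Definition G' := Pr P X2.

Hypothesis hpa : 0 < pa.
Hypothesis hpc : 0 < pc.
Hypothesis hv : Num.max ((G - pc) / pa) 0 <= v <= Num.min (G / pa) 1.

Lemma GG' : G + G' = pa + pc.
Proof.
rewrite /G /G' /X1 /X2 -PrLftU; last first.
- by rewrite setIACA setICr setI0.
- exact: measurableI mrAC (measurableC (mrL11 y)).
- exact: measurableI mrAC (mrL11 y).
rewrite -setIUr setUv setIT /rAC PrLftU //; try exact: mrT.
by rewrite /rT; apply/seteqP; split => r [] /= -> //.
Qed.

Lemma v_facts : [/\ 0 <= v, v <= 1, pa * v <= G & G - pc <= pa * v].
Proof.
case/andP: hv; rewrite ge_max le_min => /andP[h1 h2] /andP[h3 h4].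
have pa0 : pa != 0 by rewrite gt_eqF.
split => //.
- by have := ler_wpM2l (ltW hpa) h3; rewrite mulrCA divff ?mulr1.
- by have := ler_wpM2l (ltW hpa) h1; rewrite mulrCA divff ?mulr1.
Qed.

Lemma G_ge0 : 0 <= G. Proof. exact: Pr_ge0. Qed.
Lemma G'_ge0 : 0 <= G'. Proof. exact: Pr_ge0. Qed.

Definition k1 := v / G.
Definition k2 := (1 - v) / G'.
Definition k3 := (G - pa * v) / (G * pc).
Definition k4 := (G' - pa * (1 - v)) / (G' * pc).

Lemma k1_ge0 : 0 <= k1.
Proof. by case: v_facts => ? ? ? ?; rewrite /k1 divr_ge0// G_ge0. Qed.
Lemma k2_ge0 : 0 <= k2.
Proof. by case: v_facts => ? ? ? ?; rewrite /k2 divr_ge0// ?subr_ge0// G'_ge0. Qed.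
Lemma k3_ge0 : 0 <= k3.
Proof.
case: v_facts => ? ? ? ?; rewrite /k3 divr_ge0// ?subr_ge0// mulr_ge0// ?G_ge0//.
exact: ltW.
Qed.
Lemma k4_ge0 : 0 <= k4.
Proof.
case: v_facts => ? ? ? ?; have := GG'; have := G'_ge0 => ? ?.
rewrite /k4 divr_ge0// ?mulr_ge0// ?(ltW hpc)//.
rewrite subr_ge0; nra.
Qed.

Definition p0 := wpush (P \x P)%E (@msnd2 R) (measurableX measurableT mNn) ler01.
Definition p1 := wpush (P \x P)%E (@mhmix R) (measurableX mX1 (mTt ta)) k1_ge0.
Definition p2 := wpush (P \x P)%E (@mhmix R) (measurableX mX2 (mTt ta)) k2_ge0.
Definition p3 := wpush (P \x P)%E (@mhmix R) (measurableX mX1 (mTt tc)) k3_ge0.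
Definition p4 := wpush (P \x P)%E (@mhmix R) (measurableX mX2 (mTt tc)) k4_ge0.
Definition nu0 := measure_add p0 (measure_add p1 (measure_add p2 (measure_add p3 p4))).

Lemma nu0E (S S1 S2 : set L) : measurable S -> measurable S1 -> measurable S2 ->
  (forall w w', rAC w.2 -> rAC w'.2 -> (S (hmix (w, w')) <-> S1 w /\ S2 w')) ->
  nu0 S = (Pr P (Nn `&` S) + k1 * (Pr P (X1 `&` S1) * Pr P (Lft (rT ta) `&` S2))
     + k2 * (Pr P (X2 `&` S1) * Pr P (Lft (rT ta) `&` S2))
     + k3 * (Pr P (X1 `&` S1) * Pr P (Lft (rT tc) `&` S2))
     + k4 * (Pr P (X2 `&` S1) * Pr P (Lft (rT tc) `&` S2)))%:E.
Proof.
move=> mS mS1 mS2 H.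
transitivity (p0 S + (p1 S + (p2 S + (p3 S + p4 S))))%E.
  rewrite /nu0; etransitivity; first exact: measure_addE. congr (_ + _)%E.
  etransitivity; first exact: measure_addE. congr (_ + _)%E.
  etransitivity; first exact: measure_addE. congr (_ + _)%E.
  exact: measure_addE.
rewrite /p0 /p1 /p2 /p3 /p4.
rewrite (@pieceE R P _ _ _ _ _ _ _ S setT S) //; try exact: mNn; last by move=> w w' _ _; split => // -[].
rewrite (@pieceE R P _ _ _ _ _ _ _ S S1 S2) //; try exact: mX1; try exact: mTt;
  last by move=> w w' Xw Yw'; apply: H; [case: Xw|left].
rewrite (@pieceE R P _ _ _ _ _ _ _ S S1 S2) //; try exact: mX2; try exact: mTt;
  last by move=> w w' Xw Yw'; apply: H; [case: Xw|left].
rewrite (@pieceE R P _ _ _ _ _ _ _ S S1 S2) //; try exact: mX1; try exact: mTt;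
  last by move=> w w' Xw Yw'; apply: H; [case: Xw|right].
rewrite (@pieceE R P _ _ _ _ _ _ _ S S1 S2) //; try exact: mX2; try exact: mTt;
  last by move=> w w' Xw Yw'; apply: H; [case: Xw|right].
rewrite setTI PrT !mul1r -!EFinD; congr EFin; ring.
Qed.
End Construct.


Section Construct2.
Variable R : realType.
Variable P : probability (Lat R) R.
Local Notation L := (Lat R).
Local Notation Rs := (Rest R).
Variables (y v : R).
Hypothesis hpa : 0 < pa P.
Hypothesis hpc : 0 < pc P.
Hypothesis hv : Num.max ((G P y - pc P) / pa P) 0 <= v <= Num.min (G P y / pa P) 1.

Local Notation pa := (pa P).
Local Notation pc := (pc P).
Local Notation G := (G P y).
Local Notation G' := (G' P y).
Local Notation k1 := (k1 P y v).
Local Notation k2 := (k2 P y v).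
Local Notation k3 := (k3 P y v).
Local Notation k4 := (k4 P y v).
Local Notation nu0 := (nu0 hpa hpc hv).

Lemma vf : [/\ 0 <= v, v <= 1, pa * v <= G & G - pc <= pa * v].
Proof. exact: v_facts hpa hv. Qed.
Lemma GG : G + G' = pa + pc. Proof. exact: GG'. Qed.

Lemma e1 : k1 * G = v.
Proof.
case: vf => v0 v1 pv1 pv2; rewrite /k1.
have [G0|G0] := eqVneq G 0.
  rewrite G0 mulr0; apply/eqP; rewrite eq_le v0 /=.
  by rewrite -(ler_pM2l hpa) mulr0 -G0.
by rewrite mulfVK.
Qed.
Lemma e2 : k2 * G' = 1 - v.
Proof.
case: vf => v0 v1 pv1 pv2; have := GG => gg; rewrite /k2.
have [G0|G0] := eqVneq G' 0.
  rewrite G0 mulr0; apply/eqP; rewrite eq_le subr_ge0 v1 /=.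
  rewrite -(ler_pM2l hpa) mulr0; nra.
by rewrite mulfVK.
Qed.
Lemma e3 : k3 * G = (G - pa * v) / pc.
Proof.
case: vf => v0 v1 pv1 pv2; rewrite /k3.
have [G0|G0] := eqVneq G 0.
  rewrite G0 mulr0; have -> : pa * v = 0.
    by apply/eqP; rewrite eq_le mulr_ge0 ?(ltW hpa)// andbT -G0.
  by rewrite subrr mul0r.
by rewrite invfM mulrA mulrAC mulfVK.
Qed.
Lemma e4 : k4 * G' = (G' - pa * (1 - v)) / pc.
Proof.
case: vf => v0 v1 pv1 pv2; have := GG => gg; rewrite /k4.
have [G0|G0] := eqVneq G' 0.
  rewrite G0 mulr0; have -> : pa * (1 - v) = 0.
    apply/eqP; rewrite eq_le mulr_ge0 ?subr_ge0 ?(ltW hpa)// andbT; nra.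
  by rewrite subrr mul0r.
by rewrite invfM mulrA mulrAC mulfVK.
Qed.

Local Notation Ta := (Lft (rT ta) : set L).
Local Notation Tc := (Lft (rT tc) : set L).
Local Notation XX1 := (X1 y : set L).
Local Notation XX2 := (X2 y : set L).
Local Notation NN := (@Nn R : set L).

Lemma mLAC : measurable (Lft (@rAC R) : set L). Proof. apply: mLft; exact: mrAC. Qed.
Lemma mLc : measurable (Lft (rL11 y) : set L). Proof. apply: mLft; exact: mrL11. Qed.

Ltac setsolveS := apply/seteqP; split => w;
  cbv beta iota delta [Lft setI setC setU preimage mkset Nn X1 X2]; tauto.

Lemma part3a S : measurable S ->
  Pr P S = Pr P (NN `&` S) + Pr P (XX1 `&` S) + Pr P (XX2 `&` S).
Proof.
move=> mS; rewrite (Pr_split P mS mLAC) (Pr_split P (measurableI _ _ mS mLAC) mLc).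
have -> : S `&` ~` Lft (@rAC R) = NN `&` S by setsolveS.
have -> : S `&` Lft (@rAC R) `&` Lft (rL11 y) = XX1 `&` S by setsolveS.
have -> : S `&` Lft (@rAC R) `&` ~` Lft (rL11 y) = XX2 `&` S by setsolveS.
ring.
Qed.

Lemma part3b S : measurable S ->
  Pr P S = Pr P (NN `&` S) + Pr P (Ta `&` S) + Pr P (Tc `&` S).
Proof.
move=> mS; rewrite (Pr_split P mS mLAC).
have -> : S `&` ~` Lft (@rAC R) = NN `&` S by setsolveS.
have -> : S `&` Lft (@rAC R) = (Ta `&` S) `|` (Tc `&` S) by rewrite /(@rAC R); setsolveS.
rewrite PrU; first ring.
- exact: measurableI (mTt _) mS.
- exact: measurableI (mTt _) mS.
- apply/seteqP; split => // w [[+ _] [+ _]]; rewrite /Lft /rT /preimage /=.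
  by move=> ->.
Qed.

Lemma coefX1 x : 0 <= x <= G -> k1 * (x * pa) + k3 * (x * pc) = x.
Proof.
move=> /andP[x0 xG]; have [G0|G0] := eqVneq G 0.
  have -> : x = 0 by apply/eqP; rewrite eq_le x0 -G0 xG.
  by rewrite !mul0r !mulr0 addr0.
rewrite /k1 /k3; field; apply/andP; split => //; exact: lt0r_neq0.
Qed.
Lemma coefX2 x : 0 <= x <= G' -> k2 * (x * pa) + k4 * (x * pc) = x.
Proof.
move=> /andP[x0 xG]; have := GG => gg; have [G0|G0] := eqVneq G' 0.
  have -> : x = 0 by apply/eqP; rewrite eq_le x0 -G0 xG.
  by rewrite !mul0r !mulr0 addr0.
rewrite /k2 /k4; field; apply/andP; split => //; exact: lt0r_neq0.
Qed.

Lemma nu_z1 S : measurable S ->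
  (forall w w', (@rAC R) w.2 -> (@rAC R) w'.2 -> (S (hmix (w, w')) <-> S w)) ->
  nu0 S = (Pr P S)%:E.
Proof.
move=> mS HS; rewrite (@nu0E R P y v hpa hpc hv S S setT) //; last first.
  by move=> w w' h1 h2; rewrite HS//; split => // -[].
rewrite !setIT (part3a mS); congr EFin.
have h1 : 0 <= Pr P (XX1 `&` S) <= G.
  rewrite Pr_ge0 /=; apply: Pr_le; [exact: (measurableI _ _ (mX1 y) mS)|exact: mX1|exact: subIsetl].
have h2 : 0 <= Pr P (XX2 `&` S) <= G'.
  rewrite Pr_ge0 /=; apply: Pr_le; [exact: (measurableI _ _ (mX2 y) mS)|exact: mX2|exact: subIsetl].
rewrite -{3}(coefX1 h1) -{3}(coefX2 h2) /pa /pc; ring.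
Qed.

Lemma nu_z0 S : measurable S ->
  (forall w w', (@rAC R) w.2 -> (@rAC R) w'.2 -> (S (hmix (w, w')) <-> S w')) ->
  nu0 S = (Pr P S)%:E.
Proof.
move=> mS HS; rewrite (@nu0E R P y v hpa hpc hv S setT S) //; last first.
  by move=> w w' h1 h2; rewrite HS//; split => // -[].
rewrite !setIT (part3b mS); congr EFin.
have := e1; have := e2; have := e3; have := e4; have := GG.
rewrite /G /G' /pa /pc => gg h4 h3 h2 h1.
rewrite !mulrA h1 h2 h3 h4.
have pc0 : Pr P (Lft (rT tc)) != 0 by exact: lt0r_neq0.
have -> : Pr P (X2 y) = Pr P (Lft (rT ta)) + Pr P (Lft (rT tc)) - Pr P (X1 y).
  by rewrite -gg; ring.
field; exact: pc0.
Qed.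

Ltac hmixsolve := move=> [? [[[[[? ?] ?] ?] ?] ?]] [? [[[[[? ?] ?] ?] ?] ?]];
  cbv beta iota delta [hmix Lft preimage rT rAC rD0 rD1 rY11 rL11 setI setU mkset setT fst snd];
  intuition.

Lemma nu_setT : nu0 setT = 1%E.
Proof. by rewrite (@nu_z0 setT) ?PrT//; move=> *. Qed.

Lemma nu_T t : nu0 (Lft (rT t)) = (Pr P (Lft (rT t)))%:E.
Proof. apply: nu_z0; first exact: mTt. hmixsolve. Qed.

Lemma nu_La : nu0 (Lft (rL11 y `&` rT ta)) = (v * pa)%:E.
Proof.
rewrite (@nu0E R P y v hpa hpc hv _ (Lft (rL11 y)) (Lft (rT ta))); last first.
- hmixsolve.
- exact: mTt.
- exact: mLc.
- apply: mLft; apply: measurableI; [exact: mrL11|exact: mrT].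
have -> : NN `&` Lft (rL11 y `&` rT ta) = set0.
  apply/seteqP; split => // w; rewrite /Nn /Lft /preimage /rAC /=.
  by move=> [+ [_ h]]; apply; left.
have -> : XX1 `&` Lft (rL11 y) = XX1 by apply/seteqP; split => w //= [].
have -> : XX2 `&` Lft (rL11 y) = set0 by apply/seteqP; split => // w /= [[_ ?]].
have -> : Lft (rT tc) `&` Lft (rT ta) = set0 :> set L.
  by apply/seteqP; split => // -[z r] /= []; rewrite /Lft /rT /preimage /= => ->.
rewrite setIid !Pr0 !mul0r !mulr0 !addr0 add0r mulrA e1 //.
Qed.
End Construct2.



Section Obs.
Variable R : realType.
Local Notation L := (Lat R).
Local Notation Rs := (Rest R).
Lemma mobs : measurable_fun setT (@obs R).
Proof.
rewrite /obs; apply: mpair; last by apply: mfst_comp; mproj.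
have mZ : measurable_fun setT (@Zv R) by rewrite /Zv; mproj.
have mD : measurable_fun setT (@Dv R).
  by rewrite /Dv; apply: measurable_fun_ifT => //; rewrite /D1v /D0v; mproj.
apply: mpair => //.
have -> : @Yv R = fun w => if Dv w then (if Zv w then Y11v w else Y10v w)
                       else (if Zv w then Y01v w else Y00v w).
  by apply/funext => w; rewrite /Yv /Ypot; case: (Dv w); case: (Zv w).
apply: measurable_fun_ifT => //; apply: measurable_fun_ifT => //;
  rewrite /Y11v /Y10v /Y01v /Y00v; mproj.
Qed.

Definition Bsl (b : bool) (E : set (R * bool * bool)) : set Rs := [set r | E (obs (b, r))].
Lemma mBsl b E : measurable E -> measurable (Bsl b E).
Proof.
move=> mE; rewrite /Bsl.
have -> : [set r : Rs | E (obs (b, r))] = (fun r : Rs => obs (b, r)) @^-1` E by [].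
apply: mpreT => //; apply: (measurableT_comp mobs); mproj.
Qed.
Lemma obs_split E : (@obs R) @^-1` E = ([set true] `*` Bsl true E) `|` ([set false] `*` Bsl false E).
Proof. by apply/seteqP; split => -[[] r] /=; rewrite /Bsl /=; [left|right|case=> -[]|case=> -[]]. Qed.
End Obs.

Section QDef.
Variable R : realType.
Variable P : probability (Lat R) R.
Local Notation L := (Lat R).
Local Notation Rs := (Rest R).
Variables (y v : R).
Hypothesis hpa : 0 < pa P.
Hypothesis hpc : 0 < pc P.
Hypothesis hv : Num.max ((G P y - pc P) / pa P) 0 <= v <= Num.min (G P y / pa P) 1.
Local Notation nu0 := (nu0 hpa hpc hv).

Definition nu : probability L R := mkprob (nu_setT hpa hpc hv).
Definition Q0 := wpush (P \x nu)%E (@mHcomb R) measurableT ler01.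
Lemma Q0T : Q0 setT = 1%E.
Proof.
rewrite /Q0 /wpush mul1e preimage_setT setIT -setXTT.
transitivity (P setT * nu setT)%E; first exact: product_measure1E.
by rewrite !probability_setT mule1.
Qed.
Definition Qp : probability L R := mkprob Q0T.

Lemma QpE (A : set bool) (B : set Rs) : measurable B ->
  Qp (A `*` B) = (P (fst @^-1` A) * nu0 (Lft B))%E.
Proof.
move=> mB; transitivity (Q0 (A `*` B)); first reflexivity.
rewrite /Q0 /wpush mul1e setIT.
transitivity ((P \x nu)%E ((fst @^-1` A) `*` Lft B)); first reflexivity.
transitivity (P (fst @^-1` A) * nu (Lft B))%E.
  apply: product_measure1E; last exact: mLft.
  by apply: mpreT => //; exact: measurable_fst.
reflexivity.
Qed.

Lemma QpLft (B : set Rs) : measurable B -> Qp (Lft B) = nu0 (Lft B).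
Proof.
move=> mB; have -> : Qp (Lft B) = Qp ([set: bool] `*` B).
  by congr (Qp _); apply/seteqP; split => -[z r] //= [].
by rewrite QpE// preimage_setT probability_setT mul1e.
Qed.
End QDef.

Section QProps.
Variable R : realType.
Variable P : probability (Lat R) R.
Local Notation L := (Lat R).
Local Notation Rs := (Rest R).
Variables (y v : R).
Hypothesis hpa : 0 < pa P.
Hypothesis hpc : 0 < pc P.
Hypothesis hv : Num.max ((G P y - pc P) / pa P) 0 <= v <= Num.min (G P y / pa P) 1.
Hypothesis hRA : RA P.
Hypothesis hdf : Pr P (Lft (rT tdf)) = 0.
Local Notation nu0 := (nu0 hpa hpc hv).
Local Notation Q := (Qp hpa hpc hv).

Lemma RA_Q : RA Q.
Proof.
move=> A B mB; rewrite QpE//.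
have -> : Q (fst @^-1` A) = Q (A `*` [set: Rs]).
  by congr (Q _); apply/seteqP; split => -[z r] //= [].
have -> : Q (snd @^-1` B) = Q ([set: bool] `*` B).
  by congr (Q _); apply/seteqP; split => -[z r] //= [].
rewrite !QpE// preimage_setT probability_setT mul1e.
by rewrite (nu_setT hpa hpc hv) mule1.
Qed.

Lemma MON_Q : MON Q.
Proof.
left; rewrite /nbhs /=; exists (Lft (rT tdf)); split.
- exact: mTt.
- etransitivity; first exact: (QpLft hpa hpc hv (mrT tdf)).
  by rewrite (nu_T hpa hpc hv) hdf.
- move=> [z [[[[[d0 d1] a] b] c] e]] /=; rewrite /D0v /D1v /Lft /rT /rD0 /rD1 /preimage /=.
  by case: d0; case: d1.
Qed.

Lemma Fpot_Q : Fpot Q true true ta y = v.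
Proof.
rewrite /Fpot /Prc.
change (fine (Q (Lft (rL11 y `&` rT ta))) / fine (Q (Lft (rT ta))) = v).
have m1 : measurable (rL11 y `&` rT ta) := measurableI _ _ (mrL11 y) (mrT ta).
rewrite (QpLft hpa hpc hv m1) (QpLft hpa hpc hv (mrT ta)) (nu_La hpa hpc hv) (nu_T hpa hpc hv) /=.
by rewrite mulfK// lt0r_neq0.
Qed.

Lemma nu_B1 E : measurable E -> nu0 (Lft (Bsl true E)) = (Pr P (Lft (Bsl true E)))%:E.
Proof.
move=> mE; apply: nu_z1; first by apply: mLft; exact: mBsl.
move=> [z [[[[[d0 d1] a] b] c] e]] [z' [[[[[d0' d1'] a'] b'] c'] e']].
rewrite /rAC /rT /rD0 /rD1 /=.
by case=> -[-> ->]; case=> -[-> ->].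
Qed.

Lemma nu_B0 E : measurable E -> nu0 (Lft (Bsl false E)) = (Pr P (Lft (Bsl false E)))%:E.
Proof.
move=> mE; apply: nu_z0; first by apply: mLft; exact: mBsl.
by move=> [z [[[[[d0 d1] a] b] c] e]] [z' [[[[[d0' d1'] a'] b'] c'] e']].
Qed.

Lemma same_obs_Q : same_obs P Q.
Proof.
move=> E mE.
have mB1 := mBsl true mE; have mB0 := mBsl false mE.
have dis : ([set true] `*` Bsl true E) `&` ([set false] `*` Bsl false E) = set0.
  by apply/seteqP; split => // -[z r] /= [[-> _] [+ _]].
have mX1 : measurable ([set true] `*` Bsl true E) by apply: measurableX.
have mX0 : measurable ([set false] `*` Bsl false E) by apply: measurableX.
rewrite obs_split !measureU //.
transitivity (P (fst @^-1` [set true]) * P (Lft (Bsl true E)) +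
   P (fst @^-1` [set false]) * P (Lft (Bsl false E)))%E.
  by congr (_ + _)%E; [exact: (hRA [set true] mB1)|exact: (hRA [set false] mB0)].
transitivity (P (fst @^-1` [set true]) * nu0 (Lft (Bsl true E)) +
   P (fst @^-1` [set false]) * nu0 (Lft (Bsl false E)))%E; last first.
  by congr (_ + _)%E; apply: esym; exact: QpE.
rewrite (nu_B1 mE) (nu_B0 mE) -!PrE //; by apply: mLft.
Qed.
End QProps.


Lemma MON_of_df (R : realType) (P : probability (Lat R) R) :
  Pr P (Lft (rT tdf)) = 0 -> MON P.
Proof.
move=> hdf; left; rewrite /nbhs /=; exists (Lft (rT tdf)); split.
- exact: mTt.
- by rewrite PrE ?hdf//; exact: mTt.
- move=> [z [[[[[d0 d1] a] b] c] e]] /=; rewrite /D0v /D1v /Lft /rT /rD0 /rD1 /preimage /=.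
  by case: d0; case: d1.
Qed.

Lemma sharp11 (R : realType) (P : probability (Lat R) R) :
  RA P -> 0 < Pr P (Zs true) < 1 -> Pr P (Lft (rT tdf)) = 0 -> 0 < ptype P tc ->
  forall y v,
  Num.max ((Prc P [set w | Yv w <= y /\ Dv w = true] [set w | Zv w = true] - ptype P tc)
     / ptype P ta) 0 <= v <=
  Num.min (Prc P [set w | Yv w <= y /\ Dv w = true] [set w | Zv w = true] / ptype P ta) 1 ->
  exists Q : probability (Lat R) R,
    [/\ RA Q, MON Q, same_obs P Q & Fpot Q true true ta y = v].
Proof.
move=> hRA hZ hdf hpc y v; rewrite (G1E hRA hZ y).
have [pa0|pa0] := eqVneq (ptype P ta) 0.
  rewrite pa0 !invr0 !mulr0 ge_max le_min => /andP[/andP[v0 _] /andP[v0' _]].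
  have -> : v = 0 by apply/eqP; rewrite eq_le v0 v0'.
  exists P; split => //; first exact: MON_of_df.
  by rewrite /Fpot /Prc; change (Pr P (Lft (rL11 y `&` rT ta)) / ptype P ta = 0); rewrite pa0 invr0 mulr0.
have hpa : 0 < pa P by rewrite lt_neqAle eq_sym pa0 Pr_ge0.
have hpc' : 0 < pc P by [].
have GE : G P y = Pr P (Lft (rL11 y `&` rT ta)) + Pr P (Lft (rL11 y `&` rT tc)).
  rewrite /G /X1 -PrLftU; first (congr Pr; congr Lft; rewrite /rAC).
  - by rewrite setIUl setIC [X in _ `|` X]setIC.
  - by apply: measurableI; [exact: mrL11|exact: mrT].
  - by apply: measurableI; [exact: mrL11|exact: mrT].
  - apply/seteqP; split => // r [[_ h1] [_ h2]].
    by move: h1 h2; rewrite /rT /= => -> [].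
rewrite -GE => hv.
exists (Qp hpa hpc' hv); split.
- exact: RA_Q.
- exact: MON_Q hdf.
- exact: same_obs_Q.
- exact: Fpot_Q.
Qed.



Lemma mnegb d (T : measurableType d) (f : T -> bool) :
  measurable_fun setT f -> measurable_fun setT (fun x => ~~ f x).
Proof. by move=> mf; exact: (measurableT_comp (@mbool _ _ negb) mf). Qed.

Section Sig.
Variable R : realType.
Local Notation L := (Lat R).
Local Notation Rs := (Rest R).
Definition tau (r : Rs) : Rs :=
  ((((~~ rD1 r, ~~ rD0 r), rY00 r), rY01 r), rY10 r, rY11 r).
Definition sig (w : L) : L := (~~ w.1, tau w.2).
Lemma mtau : measurable_fun setT tau.
Proof.
rewrite /tau; apply: mpair; last by rewrite /rY11; mproj.
apply: mpair; last by rewrite /rY10; mproj.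
apply: mpair; last by rewrite /rY01; mproj.
apply: mpair; last by rewrite /rY00; mproj.
apply: mpair.
- by apply: mnegb; rewrite /rD1; mproj.
- by apply: mnegb; rewrite /rD0; mproj.
Qed.
Lemma msig : measurable_fun setT sig.
Proof.
rewrite /sig; apply: mpair.
- by apply: mnegb; mproj.
- exact: (measurableT_comp mtau measurable_snd).
Qed.
Lemma sigK w : sig (sig w) = w.
Proof. by case: w => z [[[[[d0 d1] a] b] c] e]; rewrite /sig /tau /= !negbK. Qed.

Section SigP.
Variable M : probability L R.
Lemma sig_setT : wpush M msig measurableT ler01 setT = 1%E.
Proof. rewrite /wpush mul1e preimage_setT setIT; exact: probability_setT. Qed.
Definition sigp : probability L R := mkprob sig_setT.
Lemma sigpE X : sigp X = M (sig @^-1` X).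
Proof. by rewrite /sigp /= /mkprob /wpush mul1e setIT. Qed.
Lemma Pr_sigp X : Pr sigp X = Pr M (sig @^-1` X).
Proof. by rewrite /Pr sigpE. Qed.
Lemma Prc_sigp X Y : Prc sigp X Y = Prc M (sig @^-1` X) (sig @^-1` Y).
Proof. by rewrite /Prc !Pr_sigp. Qed.
Lemma sigpK X : sigp X = M X -> True. Proof. by []. Qed.

Lemma RA_sigp : RA M -> RA sigp.
Proof.
move=> hRA A B mB.
have mtB : measurable (tau @^-1` B) by apply: mpreT => //; exact: mtau.
rewrite !sigpE.
transitivity (M ((negb @^-1` A) `*` (tau @^-1` B))); first reflexivity.
rewrite hRA//.
Qed.

Lemma sigpp X : sigp X = M (sig @^-1` X). Proof. exact: sigpE. Qed.

Lemma preK X : sig @^-1` (sig @^-1` X) = X.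
Proof. by apply/seteqP; split => w; rewrite /preimage /= sigK. Qed.

Lemma MON_sigp : MON M -> MON sigp.
Proof.
case=> h; [left|right]; move: h; rewrite /nbhs /= => -[N [mN N0 sub]];
  exists (sig @^-1` N); split.
- by apply: mpreT => //; exact: msig.
- by transitivity (M (sig @^-1` (sig @^-1` N))); [exact: sigpE | rewrite preK].
- move=> -[z [[[[[d0 d1] a] b] c] e]] /= h; apply: sub => /=.
  by move: h; rewrite /D0v /D1v /sig /tau /rD0 /rD1 /=; case: d0; case: d1.
- by apply: mpreT => //; exact: msig.
- by transitivity (M (sig @^-1` (sig @^-1` N))); [exact: sigpE | rewrite preK].
- move=> -[z [[[[[d0 d1] a] b] c] e]] /= h; apply: sub => /=.
  by move: h; rewrite /D0v /D1v /sig /tau /rD0 /rD1 /=; case: d0; case: d1.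
Qed.
End SigP.

Lemma sigpp_eq (M : probability L R) X : sigp (sigp M) X = M X.
Proof.
transitivity (sigp M (sig @^-1` X)); first exact: sigpE.
transitivity (M (sig @^-1` (sig @^-1` X))); first exact: sigpE.
by rewrite preK.
Qed.

Definition kap (t : R * bool * bool) : R * bool * bool := (t.1.1, ~~ t.1.2, ~~ t.2).
Lemma mkap : measurable_fun setT kap.
Proof.
rewrite /kap; apply: mpair; last by apply: mnegb; mproj.
by apply: mpair; [mproj | apply: mnegb; mproj].
Qed.
Lemma obs_sig w : obs (sig w) = kap (obs w).
Proof. by case: w => [[] [[[[[[] []] a] b] c] e]]. Qed.

Lemma same_obs_sigp (M1 M2 : probability L R) :
  same_obs M1 M2 -> same_obs (sigp M1) (sigp M2).
Proof.
move=> h E mE.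
transitivity (M1 (sig @^-1` (@obs R @^-1` E))); first exact: sigpE.
transitivity (M2 (sig @^-1` (@obs R @^-1` E))); last by apply: esym; exact: sigpE.
have -> : sig @^-1` (@obs R @^-1` E) = @obs R @^-1` (kap @^-1` E).
  by apply/seteqP; split => w; rewrite /preimage /= obs_sig.
apply: h; apply: mpreT => //; exact: mkap.
Qed.
End Sig.



Ltac sigsolve := apply/seteqP; split => -[[] [[[[[[] []] a] b] c] e]];
  cbv beta iota delta [sig tau negb Lft Zs rT rD0 rD1 rY11 rY10 rY01 rY00 Yv Dv Zv Tv D0v D1v Ypot Y11v Y10v Y01v Y00v setI preimage setU setC set1 setT set0 mkset fst snd ta tn tc tdf] ;
  intuition (try discriminate).

Section Transfer.
Variable R : realType.
Variable M : probability (Lat R) R.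
Local Notation M' := (sigp M).

Lemma T_ptype_a : ptype M' ta = ptype M tn.
Proof. by rewrite /ptype Pr_sigp; congr Pr; sigsolve. Qed.
Lemma T_ptype_c : ptype M' tc = ptype M tc.
Proof. by rewrite /ptype Pr_sigp; congr Pr; sigsolve. Qed.
Lemma T_ptype_df : Pr M' (Lft (rT tdf)) = Pr M (Lft (rT tdf)).
Proof. by rewrite Pr_sigp; congr Pr; sigsolve. Qed.
Lemma T_Zs : Pr M' (Zs true) = Pr M (Zs false).
Proof. by rewrite Pr_sigp; congr Pr; sigsolve. Qed.
Lemma T_G (y : R) : Prc M' [set w | Yv w <= y /\ Dv w = true] [set w | Zv w = true] =
  Prc M [set w | Yv w <= y /\ Dv w = false] [set w | Zv w = false].
Proof. by rewrite Prc_sigp; congr Prc; sigsolve. Qed.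
Lemma T_F11a (y : R) : Fpot M' true true ta y = Fpot M false false tn y.
Proof. by rewrite /Fpot Prc_sigp; congr Prc; sigsolve. Qed.
Lemma T_F11c (y : R) : Fpot M' true true tc y = Fpot M false false tc y.
Proof. by rewrite /Fpot Prc_sigp; congr Prc; sigsolve. Qed.
Lemma T_F10a (y : R) : Fpot M' true false ta y = Fpot M false true tn y.
Proof. by rewrite /Fpot Prc_sigp; congr Prc; sigsolve. Qed.
Lemma T_Prc10 (y : R) : Prc M' [set w | Yv w <= y] [set w | Dv w = true /\ Zv w = false] =
  Prc M [set w | Yv w <= y] [set w | Dv w = false /\ Zv w = true].
Proof. by rewrite Prc_sigp; congr Prc; sigsolve. Qed.
Lemma T_F00n (y : R) : Fpot M' false false tn y = Fpot M true true ta y.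
Proof. by rewrite /Fpot Prc_sigp; congr Prc; sigsolve. Qed.
End Transfer.

Lemma partA11 (R : realType) (P : probability (Lat R) R) :
  RA P -> 0 < Pr P (Zs true) < 1 -> Pr P (Lft (rT tdf)) = 0 -> 0 < ptype P tc ->
  forall y,
  let G1 := Prc P [set w | Yv w <= y /\ Dv w = true] [set w | Zv w = true] in
  [/\ Num.max ((G1 - ptype P tc) / ptype P ta) 0 <= Fpot P true true ta y
        <= Num.min (G1 / ptype P ta) 1,
      Fpot P true true tc y = (G1 - ptype P ta * Fpot P true true ta y) / ptype P tc &
      Fpot P true false ta y = Prc P [set w | Yv w <= y] [set w | Dv w = true /\ Zv w = false]].
Proof.
move=> hRA hZ hdf hpc y G1; rewrite /G1 (G1E hRA hZ y) {G1}.
have mLa : measurable (Lft (rL11 y `&` rT ta) : set (Lat R)).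
  by apply: mLft; apply: measurableI; [exact: mrL11|exact: mrT].
have mLc : measurable (Lft (rL11 y `&` rT tc) : set (Lat R)).
  by apply: mLft; apply: measurableI; [exact: mrL11|exact: mrT].
have hA : 0 <= Pr P (Lft (rL11 y `&` rT ta)) <= ptype P ta.
  by rewrite Pr_ge0 /=; apply: Pr_le => //; [exact: mTt| by move=> w []].
have hC : 0 <= Pr P (Lft (rL11 y `&` rT tc)) <= ptype P tc.
  by rewrite Pr_ge0 /=; apply: Pr_le => //; [exact: mTt| by move=> w []].
have -> : Fpot P true true ta y = Pr P (Lft (rL11 y `&` rT ta)) / ptype P ta by [].
have -> : Fpot P true true tc y = Pr P (Lft (rL11 y `&` rT tc)) / ptype P tc by [].
split.
- exact: boundsR.
- by apply: F11cR => //; exact: lt0r_neq0.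
- exact: F10aE.
Qed.



Section Econd.
Variable R : realType.
Variable P : probability (Lat R) R.
Hypothesis hRA : RA P.
Hypothesis hZ : 0 < Pr P (Zs true) < 1.

Lemma mDv : measurable_fun setT (@Dv R).
Proof. by rewrite /Dv; apply: measurable_fun_ifT; rewrite /Zv /D1v /D0v; mproj. Qed.

Lemma EcondInd (f : Lat R -> R) (b b' : bool) :
  (forall w, f w = (Dv w == b')%:R) ->
  EcondZ P f b = Pr P ([set w | Dv w = b'] `&` Zs b) / Pr P (Zs b).
Proof.
move=> hf; rewrite /EcondZ.
have mDb : measurable [set w : Lat R | Dv w = b'].
  have -> : [set w : Lat R | Dv w = b'] = (@Dv R) @^-1` [set b'] by [].
  by apply: mpreT => //; exact: mDv.
rewrite (eq_integral (fun w => (\1_[set w | Dv w = b'] w)%:E)); last first.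
  move=> w _; rewrite hf indicE.
  case: (Dv w =P b') => e; [by rewrite (@mem_set _ [set w | Dv w = b'] w e) | by rewrite (@memNset _ [set w | Dv w = b'] w e)].
rewrite integral_indic //; last exact: mZs.
Qed.

Lemma PrLd1 b : Pr P (Lft [set r | rD1 r = b]) =
  if b then ptype P ta + ptype P tc else ptype P tn + ptype P tdf.
Proof.
case: b.
- have -> : [set r : Rest R | rD1 r = true] = rT ta `|` rT tc by setsolveR.
  by rewrite PrLftU; first reflexivity; try exact: mrT; setsolveR.
- have -> : [set r : Rest R | rD1 r = false] = rT tn `|` rT tdf by setsolveR.
  by rewrite PrLftU; first reflexivity; try exact: mrT; setsolveR.
Qed.
Lemma PrLd0 b : Pr P (Lft [set r | rD0 r = b]) =
  if b then ptype P ta + ptype P tdf else ptype P tn + ptype P tc.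
Proof.
case: b.
- have -> : [set r : Rest R | rD0 r = true] = rT ta `|` rT tdf by setsolveR.
  by rewrite PrLftU; first reflexivity; try exact: mrT; setsolveR.
- have -> : [set r : Rest R | rD0 r = false] = rT tn `|` rT tc by setsolveR.
  by rewrite PrLftU; first reflexivity; try exact: mrT; setsolveR.
Qed.

Lemma ED1 : EcondZ P (fun w => (Dv w)%:R) true = ptype P ta + ptype P tc.
Proof.
rewrite (@EcondInd _ true true); last by move=> w; case: (Dv w).
have -> : [set w : Lat R | Dv w = true] `&` Zs true = Zs true `&` Lft [set r | rD1 r = true].
  by setsolve.
rewrite RAPr //; last exact: mrD1b.
by rewrite mulrAC divff ?mul1r ?PrLd1 //; exact: PrZ_neq0.
Qed.
Lemma ED0 : EcondZ P (fun w => (Dv w)%:R) false = ptype P ta + ptype P tdf.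
Proof.
rewrite (@EcondInd _ false true); last by move=> w; case: (Dv w).
have -> : [set w : Lat R | Dv w = true] `&` Zs false = Zs false `&` Lft [set r | rD0 r = true].
  by setsolve.
rewrite RAPr //; last exact: mrD0b.
by rewrite mulrAC divff ?mul1r ?PrLd0 //; exact: PrZ_neq0.
Qed.
Lemma EN1 : EcondZ P (fun w => 1 - (Dv w)%:R) true = ptype P tn + ptype P tdf.
Proof.
rewrite (@EcondInd _ true false); last by move=> w; case: (Dv w); rewrite ?subrr ?subr0.
have -> : [set w : Lat R | Dv w = false] `&` Zs true = Zs true `&` Lft [set r | rD1 r = false].
  by setsolve.
rewrite RAPr //; last exact: mrD1b.
by rewrite mulrAC divff ?mul1r ?PrLd1 //; exact: PrZ_neq0.
Qed.
End Econd.

Unset Implicit Arguments.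


Theorem proposition3 (R : realType) (P : probability (Lat R) R) :
  0 < Pr P [set w | Zv w = true] < 1 ->
  RA P -> MON P ->
  EcondZ P (fun w => (Dv w)%:R) true - EcondZ P (fun w => (Dv w)%:R) false > 0 ->
  let pc := EcondZ P (fun w => (Dv w)%:R) true - EcondZ P (fun w => (Dv w)%:R) false in
  let pa := EcondZ P (fun w => (Dv w)%:R) false in
  let pn := EcondZ P (fun w => 1 - (Dv w)%:R) true in
  let G1 := fun y : R =>
    Prc P [set w | Yv w <= y /\ Dv w = true] [set w | Zv w = true] in
  let G0 := fun y : R =>
    Prc P [set w | Yv w <= y /\ Dv w = false] [set w | Zv w = false] in
  let LB11a := fun y => Num.max ((G1 y - pc) / pa) 0 in
  let UB11a := fun y => Num.min (G1 y / pa) 1 in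
  let LB00n := fun y => Num.max ((G0 y - pc) / pn) 0 in
  let UB00n := fun y => Num.min (G0 y / pn) 1 in
  [/\ ptype P tc = pc, ptype P ta = pa, ptype P tn = pn & ptype P tdf = 0] /\
   (forall y, LB11a y <= Fpot P true true ta y <= UB11a y) /\
   (forall y, LB00n y <= Fpot P false false tn y <= UB00n y) /\
   (forall y, Fpot P true true tc y = (G1 y - pa * Fpot P true true ta y) / pc) /\
   (forall y, Fpot P false false tc y = (G0 y - pn * Fpot P false false tn y) / pc) /\
   (forall y, Fpot P true false ta y =
      Prc P [set w | Yv w <= y] [set w | Dv w = true /\ Zv w = false]) /\
   (forall y, Fpot P false true tn y =
      Prc P [set w | Yv w <= y] [set w | Dv w = false /\ Zv w = true]) /\
   (forall y v, LB11a y <= v <= UB11a y ->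
      exists Q : probability (Lat R) R,
        [/\ RA Q, MON Q, same_obs P Q & Fpot Q true true ta y = v]) /\
   (forall y v, LB00n y <= v <= UB00n y ->
      exists Q : probability (Lat R) R,
        [/\ RA Q, MON Q, same_obs P Q & Fpot Q false false tn y = v]).
Proof.
move=> hZ hRA hMON hpos pc pa pn G1 G0 LB11a UB11a LB00n UB00n.
have hZ' : 0 < Pr P (Zs true) < 1 := hZ.
have e1 := ED1 hRA hZ'; have e0 := ED0 hRA hZ'; have en := EN1 hRA hZ'.
have hdf : ptype P tdf = 0.
  case: hMON; rewrite /nbhs /= => -[N [mN N0 sub]].
  - apply: (@Pr_null R P _ N (mTt tdf) mN); last by rewrite /Pr N0.
    by move=> [z [[[[[d0 d1] a] b] c] e]]; rewrite /Lft /rT /preimage /rD0 /rD1 /= => -[-> ->]; apply: sub.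
  - have pc0 : ptype P tc = 0.
      apply: (@Pr_null R P _ N (mTt tc) mN); last by rewrite /Pr N0.
      by move=> [z [[[[[d0 d1] a] b] c] e]]; rewrite /Lft /rT /preimage /rD0 /rD1 /= => -[-> ->]; apply: sub.
    move: hpos; rewrite e1 e0 pc0 addr0 opprD addrA subrr add0r oppr_gt0.
    by rewrite ltNge Pr_ge0.
have epc : pc = ptype P tc by rewrite /pc e1 e0 hdf; ring.
have epa : pa = ptype P ta by rewrite /pa e0 hdf addr0.
have epn : pn = ptype P tn by rewrite /pn en hdf addr0.
have hpc : 0 < ptype P tc by rewrite -epc.
rewrite {}/LB11a {}/UB11a {}/LB00n {}/UB00n {}/G1 {}/G0 epc epa epn.
have hRA' := RA_sigp hRA.
have hZ'' : 0 < Pr (sigp P) (Zs true) < 1.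
  rewrite T_Zs PrZ0; case/andP: hZ' => h1 h2; apply/andP; split; lra.
have hdf' : Pr (sigp P) (Lft (rT tdf)) = 0 by rewrite T_ptype_df.
have hpc' : 0 < ptype (sigp P) tc by rewrite T_ptype_c.
have A11 := partA11 hRA hZ' hdf hpc.
have A00 := partA11 hRA' hZ'' hdf' hpc'.
split; first by split.
split; first by move=> y; case: (A11 y).
split.
  by move=> y; case: (A00 y); rewrite T_G T_F11a T_ptype_a T_ptype_c.
split; first by move=> y; case: (A11 y).
split.
  by move=> y; case: (A00 y); rewrite T_G T_F11a T_F11c T_ptype_a T_ptype_c.
split; first by move=> y; case: (A11 y).
split.
  by move=> y; case: (A00 y); rewrite T_F10a T_Prc10.
split.
  by move=> y v hv; exact: (sharp11 hRA hZ' hdf hpc hv).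
move=> y v hv.
have hv' : Num.max ((Prc (sigp P) [set w | Yv w <= y /\ Dv w = true] [set w | Zv w = true]
     - ptype (sigp P) tc) / ptype (sigp P) ta) 0 <= v <=
  Num.min (Prc (sigp P) [set w | Yv w <= y /\ Dv w = true] [set w | Zv w = true]
     / ptype (sigp P) ta) 1.
  by rewrite T_G T_ptype_a T_ptype_c.
have [Q' [h1 h2 h3 h4]] := sharp11 hRA' hZ'' hdf' hpc' hv'.
exists (sigp Q'); split.
- exact: RA_sigp.
- exact: MON_sigp.
- move=> E mE.
  transitivity (sigp (sigp P) (@obs R @^-1` E)); first by rewrite sigpp_eq.
  exact: (same_obs_sigp h3 mE).
- by rewrite T_F00n.
Qed.
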